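(* For every $0<p<q<1$ there exists a real sequence $\{a_n\}_{n\geq 0}$ such that $\{a_n^p\}_{n\geq 0}$ converges to $0$ but $\{a_n^q\}_{n\geq 0}$ does not converge.
   Context: For a real sequence $\{a_n\}_{n\geq0}$ and $0<r<1$, $a^r_n=\sum_{i=0}^n\binom{n}{i}r^i(1-r)^{n-i}a_i$. *)

(* Defs.v *)
From Stdlib Require Import Reals.
Open Scope R_scope.

(* Binomial (Euler) transform: a^r_n = sum_{i=0}^n C(n,i) r^i (1-r)^(n-i) a_i *)
Definition binom_transform (r : R) (a : nat -> R) (n : nat) : R :=
  sum_f_R0 (fun i => Binomial.C n i * r ^ i * (1 - r) ^ (n - i) * a i) n.

(* Main.v *)
Require Import Defs.
From Stdlib Require Import Reals Lra Lia.
Open Scope R_scope.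

Lemma bt_geom (r c : R) (n : nat) :
  binom_transform r (fun i => c ^ i) n = (1 - r + r * c) ^ n.
Proof.
  unfold binom_transform.
  replace (1 - r + r * c) with (r * c + (1 - r)) by ring.
  rewrite binomial.
  apply sum_eq; intros i _.
  rewrite Rpow_mult_distr. ring.
Qed.

Lemma neg1_pow_abs (n : nat) : Rabs ((-1) ^ n) = 1.
Proof. rewrite <- RPow_abs. replace (Rabs (-1)) with 1 by (rewrite Rabs_left; lra). apply pow1. Qed.

Theorem proposition2 :
  forall p q : R, 0 < p -> p < q -> q < 1 ->
  exists a : nat -> R,
    Un_cv (binom_transform p a) 0 /\
    ~ (exists l : R, Un_cv (binom_transform q a) l).
Proof.
  intros p q Hp Hpq Hq.
  exists (fun i => (1 - 2 / q) ^ i).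
  split.
  - intros eps Heps.
    assert (Ht : Rabs (1 - p + p * (1 - 2 / q)) < 1).
    { replace (1 - p + p * (1 - 2 / q)) with (1 - 2 * (p / q)) by (field; lra).
      assert (0 < p / q < 1).
      { split. apply Rdiv_lt_0_compat; lra.
        apply (Rmult_lt_reg_r q); [lra|]. unfold Rdiv. rewrite Rmult_assoc, Rinv_l; lra. }
      apply Rabs_def1; lra. }
    destruct (pow_lt_1_zero _ Ht eps Heps) as [N HN].
    exists N. intros n Hn. unfold R_dist. rewrite bt_geom, Rminus_0_r. apply HN; lia.
  - intros [l Hl].
    destruct (Hl 1 ltac:(lra)) as [N HN].
    assert (E : forall n, binom_transform q (fun i => (1 - 2 / q) ^ i) n = (-1) ^ n).
    { intro n. rewrite bt_geom. f_equal. field. lra. }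
    pose proof (HN N ltac:(lia)) as H1.
    pose proof (HN (S N) ltac:(lia)) as H2.
    unfold R_dist in H1, H2. rewrite E in H1, H2. simpl in H2.
    pose proof (neg1_pow_abs N) as HA.
    destruct (Rabs_def2 _ _ H1). destruct (Rabs_def2 _ _ H2).
    destruct (Rcase_abs ((-1)^N)) as [Hn|Hn].
    + rewrite Rabs_left in HA by lra. lra.
    + rewrite Rabs_right in HA by lra. lra.
Qed.
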